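(* Consider the control system $\dot x=f(x,u)$, $t\ge0$, where $f\colon\mathcal{X}\times\mathcal{U}\to\mathbb{R}^n$ is continuous on a neighborhood $\mathcal{X}\times\mathcal{U}\subseteq\mathbb{R}^n\times\mathbb{R}^m$ of the origin and $f(0,0)=0$. Let $d$ be a nonnegative function defined on a neighborhood of $0\in\mathbb{R}^n$. Suppose the system is locally asymptotically stabilizable and $u$ is a stabilizing feedback (in the sense described in the context) satisfying $\|u(x)\|\le d(x)$ for all $x$ with $\|x\|$ sufficiently small. Write $F_u(x):=f(x,u(x))$, $$g(r):=\Gamma_0\big(f(\mathbb{B}_r(0,0))\big),\qquad h(r):=\sup_{y\in\mathbb{B}_r(0)}\|F_u^{-1}(y)\|.$$ Then $$r\ \le\ g\left(\sqrt{\|d\|_{\mathbb{B}_{h(r)}(0)}^2+h(r)^2}\right)\quad\text{for all sufficiently small } r>0.$$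
   Context: $\mathbb{B}_r(z)$ denotes the open ball of radius $r$ centered at $z$; on $\mathbb{R}^n\times\mathbb{R}^m$ the norm is $\|(x,u)\|=\sqrt{\|x\|^2+\|u\|^2}$. For a set $K$ in a normed space and a point $z^*$, the inradius is $\Gamma_{z^*}(K)=\sup\{\rho\ge0:\mathbb{B}_\rho(z^* )\subseteq K\}$. For a function $d$, $\|d\|_{\mathbb{B}_\rho(0)}:=\sup_{x\in\mathbb{B}_\rho(0)}d(x)$. A stabilizing feedback is a map $u\colon\mathcal{O}\to\mathcal{U}$ on a neighborhood $\mathcal{O}\subseteq\mathcal{X}$ of the origin with $u(0)=0$ such that the origin is a locally asymptotically stable equilibrium (Lyapunov stable and locally attractive) of the closed-loop system $\dot x=f(x,u(x))$, and such that $x\mapsto f(x,u(x))$ is continuous and $\dot x=f(x,u(x))$ has a unique solution for all $t$ from every initial condition in a neighborhood of the origin ($u$ itself need not be continuous); the system is locally asymptotically stabilizable if such a $u$ exists. For such $u$, $F_u$ restricted to a suitable neighborhood of the origin is a homeomorphism onto a neighborhood of the origin, and $F_u^{-1}$ denotes this local inverse. *)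

(* Defs.v *)
From HB Require Import structures.
From mathcomp Require Import all_boot all_order all_algebra.
From mathcomp Require Import all_classical all_reals all_analysis.
Set Implicit Arguments. Unset Strict Implicit. Unset Printing Implicit Defensive.
Import Order.TTheory GRing.Theory Num.Theory.
Import numFieldNormedType.Exports.
Local Open Scope classical_set_scope.
Local Open Scope ring_scope.

Section Defs.
Variable R : realType.

Definition enorm (n : nat) (v : 'rV[R]_n) : R :=
  Num.sqrt (\sum_(i < n) (v ord0 i) ^+ 2).

Definition pnorm (n m : nat) (z : 'rV[R]_n * 'rV[R]_m) : R :=
  Num.sqrt (enorm z.1 ^+ 2 + enorm z.2 ^+ 2).

Definition eball (n : nat) (z : 'rV[R]_n) (r : R) : set 'rV[R]_n :=
  [set y | enorm (y - z) < r].

Definition inradius (n : nat) (z : 'rV[R]_n) (K : set 'rV[R]_n) : \bar R :=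
  ereal_sup [set rho%:E | rho in [set rho : R | 0 <= rho /\ eball z rho `<=` K]].

Definition is_solution (n : nat) (O : set 'rV[R]_n) (F : 'rV[R]_n -> 'rV[R]_n)
  (phi : R -> 'rV[R]_n) : Prop :=
  {within [set t : R | 0 <= t], continuous phi} /\
  (forall t : R, 0 < t -> is_derive t (1 : R) phi (F (phi t))) /\
  (forall t : R, 0 <= t -> O (phi t)).

Definition Fu (n m : nat) (f : 'rV[R]_n * 'rV[R]_m -> 'rV[R]_n)
  (u : 'rV[R]_n -> 'rV[R]_m) (x : 'rV[R]_n) : 'rV[R]_n := f (x, u x).

Definition stabilizing_feedback (n m : nat) (f : 'rV[R]_n * 'rV[R]_m -> 'rV[R]_n)
  (X : set 'rV[R]_n) (U : set 'rV[R]_m) (O : set 'rV[R]_n)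
  (u : 'rV[R]_n -> 'rV[R]_m) : Prop :=
  let F := Fu f u in
  (nbhs (0 : 'rV[R]_n) O /\ O `<=` X) /\
      ((forall x, O x -> U (u x)) /\ u 0 = 0) /\
      {within O, continuous F} /\
      (exists N : set 'rV[R]_n, nbhs (0 : 'rV[R]_n) N /\
         forall x0, N x0 ->
           (exists phi, is_solution O F phi /\ phi 0 = x0) /\
           (forall phi psi, is_solution O F phi -> is_solution O F psi ->
              phi 0 = x0 -> psi 0 = x0 -> forall t : R, 0 <= t -> phi t = psi t)) /\
      (forall eps : R, 0 < eps -> exists2 del : R, 0 < del &
         forall phi, is_solution O F phi -> enorm (phi 0) < del ->
           forall t : R, 0 <= t -> enorm (phi t) < eps) /\
      (exists2 del : R, 0 < del &
         forall phi, is_solution O F phi -> enorm (phi 0) < del ->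
           phi t @[t --> +oo] --> (0 : 'rV[R]_n)).

Definition ehypot (a b : \bar R) : \bar R :=
  if (a \is a fin_num) && (b \is a fin_num)
  then (Num.sqrt (fine a ^+ 2 + fine b ^+ 2))%:E else +oo%E.

End Defs.

(* Main.v *)
Require Import Defs.
From HB Require Import structures.
From mathcomp Require Import all_boot all_order all_algebra.
From mathcomp Require Import all_classical all_reals all_analysis.
Import Order.TTheory GRing.Theory Num.Theory.
Import numFieldNormedType.Exports.
Local Open Scope classical_set_scope.
Local Open Scope ring_scope.
From mathcomp Require Import ring lra.

Section H.
Variable R : realType.
Variable n : nat.
Implicit Types v : 'rV[R]_n.

Lemma enorm_ge0 v : 0 <= enorm v.
Proof. exact: sqrtr_ge0. Qed.

Lemma enorm0 : enorm (0 : 'rV[R]_n) = 0.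
Proof.
rewrite /enorm big1 ?sqrtr0 // => i _; by rewrite mxE expr0n.
Qed.

Lemma enormZ (c : R) v : enorm (c *: v) = `|c| * enorm v.
Proof.
rewrite /enorm (eq_bigr (fun i => c ^+ 2 * (v ord0 i) ^+ 2)); last first.
  by move=> i _; rewrite mxE exprMn.
by rewrite -mulr_sumr sqrtrM ?sqr_ge0 // sqrtr_sqr.
Qed.

Lemma coord_le_enorm v i : `|v ord0 i| <= enorm v.
Proof.
rewrite /enorm -sqrtr_sqr ler_sqrt; last by apply: sumr_ge0 => j _; exact: sqr_ge0.
rewrite (bigD1 i) //= lerDl; apply: sumr_ge0 => j _; exact: sqr_ge0.
Qed.

Lemma mxnorm_le_enorm v : `|v| <= enorm v.
Proof.
rewrite [leLHS]/Num.Def.normr /= mx_normrE; apply: bigmax_le => [|[a b] _]; first exact: enorm_ge0.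
by rewrite /= (ord1 a); exact: coord_le_enorm.
Qed.

Lemma enorm_eq0 v : enorm v = 0 -> v = 0.
Proof.
move=> h; apply/normr0_eq0/le_anti; rewrite normr_ge0 andbT -h; exact: mxnorm_le_enorm.
Qed.

Lemma enorm_cont : continuous (@enorm R n).
Proof.
have hs : continuous (fun v : 'rV[R]_n => \sum_(i < n) (v ord0 i) ^+ 2).
  apply: continuous_big; first exact: add_continuous.
  move=> i _ v.
  have := continuous_comp (@coord_continuous R 1 n ord0 i v) (@exprn_continuous R 2 _).
  exact.
move=> v; have := continuous_comp (hs v) (@sqrt_continuous R _).
exact.
Qed.

Lemma nbhs_eball (x : 'rV[R]_n) (A : set 'rV[R]_n) : nbhs x A ->
  exists2 e : R, 0 < e & forall y, enorm (y - x) < e -> A y.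
Proof.
move=> /nbhs_ballP [e e0 he]; exists e => // y hy; apply: he.
rewrite -ball_normE /ball_ /= distrC; exact: le_lt_trans (mxnorm_le_enorm _) hy.
Qed.

Lemma enorm_lt_nbhs (y : 'rV[R]_n) r : enorm y < r -> \forall z \near y, enorm z < r.
Proof. move=> h; have := cvgr_lt _ (enorm_cont y) _ h. exact. Qed.

End H.
Arguments enorm_ge0 {R n}.
Arguments enorm0 {R n}.
Arguments enormZ {R n}.
Arguments enorm_eq0 {R n v}.
Arguments nbhs_eball {R n x A}.
Arguments enorm_lt_nbhs {R n y r}.

Theorem theorem4 (R : realType) (n m : nat)
  (f : 'rV[R]_n * 'rV[R]_m -> 'rV[R]_n)
  (X : set 'rV[R]_n) (U : set 'rV[R]_m)
  (D0 : set 'rV[R]_n) (d : 'rV[R]_n -> R)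
  (O : set 'rV[R]_n) (u : 'rV[R]_n -> 'rV[R]_m)
  (V W : set 'rV[R]_n) (Finv : 'rV[R]_n -> 'rV[R]_n) :
  open X -> X 0 -> open U -> U 0 ->
  {within X `*` U, continuous f} ->
  f (0, 0) = 0 ->
  nbhs (0 : 'rV[R]_n) D0 -> (forall x, D0 x -> 0 <= d x) ->
  stabilizing_feedback f X U O u ->
  (exists2 del : R, 0 < del &
     forall x, enorm x < del -> enorm (u x) <= d x) ->
  (* F_u restricted to V is a homeomorphism onto W, with inverse Finv *)
  open V -> V 0 -> V `<=` O -> open W -> W 0 ->
  (forall x, V x -> W (Fu f u x) /\ Finv (Fu f u x) = x) ->
  (forall y, W y -> V (Finv y) /\ Fu f u (Finv y) = y) ->
  {within W, continuous Finv} ->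
  let g (rho : \bar R) : \bar R :=
    inradius 0 (f @` [set z | X z.1 /\ U z.2 /\ ((pnorm z)%:E < rho)%E]) in
  let h (r : R) : \bar R :=
    ereal_sup [set (enorm (Finv y))%:E | y in [set y | W y /\ enorm y < r]] in
  let dsup (rho : \bar R) : \bar R :=
    ereal_sup [set (d x)%:E | x in [set x | D0 x /\ ((enorm x)%:E < rho)%E]] in
  exists2 r0 : R, 0 < r0 &
    forall r : R, 0 < r -> r < r0 ->
      (r%:E <= g (ehypot (dsup (h r)) (h r)))%E.
Proof.
Proof.
move=> oX X0 oU U0 fc f00 D0n d0 Hst [del del0 Hud] oV V0 VO oW W0 HV HW Fic g h dsup.
case: Hst => [ [HO OX] [ [OU u0] [Fc _] ] ].
have Fi0 : Finv 0 = 0.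
  by have := (HV 0 V0).2; rewrite /Fu u0 f00.
have [e1 e10 He1] := nbhs_eball D0n.
have eps0 : 0 < Num.min e1 del by rewrite lt_min e10 del0.
have Heps : forall x, enorm x < Num.min e1 del -> D0 x /\ enorm x < del.
  move=> x; rewrite lt_min => /andP[h1 h2]; split => //; apply: He1; by rewrite subr0.
have Fic0 : {for 0, continuous Finv}.
  by move: Fic; rewrite continuous_open_subspace // => /(_ 0); apply; exact: mem_set.
have Hn : nbhs (0:'rV[R]_n) [set y | W y /\ enorm (Finv y) < Num.min e1 del].
  have hW : nbhs (0:'rV[R]_n) W by apply: open_nbhs_nbhs; split.
  have hF : nbhs (0:'rV[R]_n) [set y | enorm (Finv y) < Num.min e1 del].
    have hA : nbhs (Finv 0) [set z | enorm z < Num.min e1 del].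
      by apply: enorm_lt_nbhs; rewrite Fi0 enorm0.
    exact: (Fic0 _ hA).
  exact: (filterI hW hF).
have [r0 r00 Hr0] := nbhs_eball Hn.
exists r0 => // r r0' rr0.
rewrite /g /inradius; apply: ereal_sup_ubound; exists r => //; split; first exact: ltW.
move=> y; rewrite /eball => yr.
have [Wy Fiy] := Hr0 y (lt_trans yr rr0).
have {}yr : enorm y < r by move: yr => /=; rewrite subr0.
have [Vx Fx] := HW y Wy.
have [D0x xdel] := Heps _ Fiy.
have ux := Hud _ xdel.
have hub : forall z, W z -> enorm z < r -> ((enorm (Finv z))%:E <= h r)%E.
  move=> z Wz zr; apply: ereal_sup_ubound; by exists z.
have strict : Finv y != 0 -> ((enorm (Finv y))%:E < h r)%E.
  move=> x0.
  have Fcx : {for Finv y, continuous (Fu f u)}.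
    have : {within V, continuous (Fu f u)} := continuous_subspaceW VO Fc.
    by rewrite continuous_open_subspace // => /(_ (Finv y)); apply; exact: mem_set.
  have HP : nbhs (Finv y) [set z | V z /\ enorm (Fu f u z) < r].
    have hV : nbhs (Finv y) V by apply: open_nbhs_nbhs; split.
    have hE : nbhs (Finv y) [set z | enorm (Fu f u z) < r].
      have hA : nbhs (Fu f u (Finv y)) [set z | enorm z < r].
        by apply: enorm_lt_nbhs; rewrite Fx.
      exact: (Fcx _ hA).
    exact: (filterI hV hE).
  have [e e0 He] := nbhs_eball HP.
  have ex0 : 0 < enorm (Finv y).
    rewrite lt_def enorm_ge0 andbT; apply/eqP => /enorm_eq0 h0; by rewrite h0 eqxx in x0.
  have c0 : 0 < e / (2 * enorm (Finv y)) by rewrite divr_gt0 // mulr_gt0.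
  have zx : enorm ((1 + e / (2 * enorm (Finv y))) *: Finv y - Finv y) < e.
    rewrite scalerDl scale1r addrAC subrr add0r enormZ gtr0_norm //.
    rewrite (_ : e / (2 * enorm (Finv y)) * enorm (Finv y) = e / 2); first by lra.
    by field; rewrite gt_eqF.
  have [Vz zr] := He _ zx.
  have [Wz Fz] := HV _ Vz.
  apply: lt_le_trans (hub _ Wz zr); rewrite Fz lte_fin enormZ gtr0_norm; last by lra.
  by rewrite mulrDl mul1r ltrDl mulr_gt0.
have Hle : ((enorm (Finv y))%:E <= h r)%E by apply: hub.
exists (Finv y, u (Finv y)); last exact: Fx.
split; first exact: OX (VO _ Vx).
split; first exact: OU (VO _ Vx).
rewrite /pnorm /=.
have [hx|x0] := eqVneq (Finv y) 0.
  rewrite hx u0 enorm0 enorm0 (_ : 0 ^+ 2 + 0 ^+ 2 = 0 :> R) ?sqrtr0; last by rewrite expr0n addr0.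
  rewrite /ehypot; case: ifPn => [/andP[Dsf Hf]|_]; last exact: ltry.
  have [ [x' [D0x' x'H] ] | none] := pselect (exists x', D0 x' /\ ((enorm x')%:E < h r)%E).
    rewrite -(fineK Hf) lte_fin in x'H.
    have := enorm_ge0 x'.
    rewrite lte_fin sqrtr_gt0 => ?; nra.
  exfalso; move: Dsf.
  rewrite /dsup (_ : [set (d x)%:E | x in _] = set0) ?ereal_sup0 //.
  apply/seteqP; split => // z [x'' [hx1 hx2] _]; apply: none; by exists x''.
have xH := strict x0.
have dx : ((d (Finv y))%:E <= dsup (h r))%E by apply: ereal_sup_ubound; exists (Finv y).
rewrite /ehypot; case: ifPn => [/andP[Dsf Hf]|_]; last exact: ltry.
rewrite -(fineK Hf) lte_fin in xH. rewrite -(fineK Dsf) lee_fin in dx.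
have := enorm_ge0 (Finv y); have := enorm_ge0 (u (Finv y)).
move=> ha hb.
rewrite lte_fin ltr_sqrt; nra.
Qed.
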